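(* Let $n\in\mathbb N$, let $K_1,\dots,K_n$ be singular kernel functions and let $J$ be an arbitrary $n$-field function. Let $j\in\{0,1,\dots,n\}$. For every $q>0$ and every $\mathbf y\in\overline S$ with $m_j(\mathbf y)\ne-\infty$ there exist $\eta>0$ and a set $Z\subseteq I_j(\mathbf y)$ such that for every $\mathbf x\in\overline S$ with $\|\mathbf x-\mathbf y\|\le\eta$: (i) $Z\subseteq I_j(\mathbf x)$, and every point of $Z$ has distance at least $\eta$ from $\{x_1,\dots,x_n\}$; (ii) $m_j(\mathbf x)=\sup_{t\in Z}F(\mathbf x,t)$; (iii) $F(\mathbf x,t)\ge m_j(\mathbf x)-q>-\infty$ for every $t\in Z$.
   Context: A kernel function is a function $K:(-1,0)\cup(0,1)\to\mathbb R$ that is concave on $(-1,0)$ and concave on $(0,1)$ and satisfies $\lim_{t\downarrow0}K(t)=\lim_{t\uparrow0}K(t)$. It is extended to $[-1,1]$ with values in $[-\infty,\infty)$ by its one-sided limits at $-1,0,1$. A kernel function is singular if $K(0)=-\infty$. An $n$-field function is a function $J:[0,1]\to[-\infty,\infty)$ that is bounded above and whose set of finite values has total weight strictly greater than $n$. Here the points $0$ and $1$ each have weight $1/2$ and every point of $(0,1)$ has weight $1$. $\overline S=\{\mathbf y\in\mathbb R^n:0\le y_1\le\dots\le y_n\le1\}$. $F(\mathbf y,t)=J(t)+\sum_{i=1}^nK_i(t-y_i)$, with the convention $a+(-\infty)=-\infty$. Set $y_0:=0$ and $y_{n+1}:=1$. For $j=0,\dots,n$ let $I_j(\mathbf y)=[y_j,y_{j+1}]$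 and $m_j(\mathbf y)=\sup_{t\in I_j(\mathbf y)}F(\mathbf y,t)$. $\|\mathbf v\|=\max_i|v_i|$. *)

(* Defs.v *)
From HB Require Import structures.
From mathcomp Require Import all_boot all_order all_algebra.
From mathcomp Require Import all_classical all_reals.
From mathcomp Require Import ereal topology normedtype.
Set Implicit Arguments. Unset Strict Implicit. Unset Printing Implicit Defensive.
Import Order.TTheory GRing.Theory Num.Theory.
Import numFieldNormedType.Exports.
Local Open Scope classical_set_scope.
Local Open Scope ring_scope.

Section Defs.
Variable R : realType.

Definition concave_on (f : R -> \bar R) (a b : R) : Prop :=
  forall x y l : R, a < x < b -> a < y < b -> 0 <= l <= 1 ->
    (l%:E * f x + (1 - l)%R%:E * f y <= f (l * x + (1 - l) * y)%R)%E.

(* K is (the extension to [-1,1] by one-sided limits of) a kernel function: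
   finite and concave on (-1,0) and on (0,1), and the values at -1, 0, 1 are
   the one-sided limits (the two one-sided limits at 0 coincide). *)
Definition kernel_function (K : R -> \bar R) : Prop :=
  (forall t : R, (-1 < t < 0) \/ (0 < t < 1) -> K t \is a fin_num) /\
  concave_on K (-1) 0 /\ concave_on K 0 1 /\
  K x @[x --> 0^'+] --> K 0 /\ K x @[x --> 0^'-] --> K 0 /\
  K x @[x --> (-1)^'+] --> K (-1) /\ K x @[x --> 1^'-] --> K 1.

Definition singular_kernel (K : R -> \bar R) : Prop :=
  kernel_function K /\ K 0 = -oo%E.

Definition pt_weight (t : R) : R := if (t == 0) || (t == 1) then 2^-1 else 1.

(* J : [0,1] -> [-oo,oo) bounded above, whose set of finite values has total
   weight > n; the total weight of a (possibly infinite) set is the supremum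
   of the weights of its finite subsets. *)
Definition field_function (n : nat) (J : R -> \bar R) : Prop :=
  (exists M : R, forall t : R, 0 <= t <= 1 -> (J t <= M%:E)%E) /\
  exists s : seq R,
    [/\ uniq s,
        all (fun t => (0 <= t <= 1) && (J t \is a fin_num)) s &
        n%:R < \sum_(t <- s) pt_weight t].

Definition Sbar (n : nat) (y : 'I_n -> R) : Prop :=
  (forall i : 'I_n, 0 <= y i <= 1) /\
  (forall i j : 'I_n, (i <= j)%N -> y i <= y j).

(* coordinate y_k with the conventions y_0 = 0, y_{n+1} = 1
   (y_k, 1 <= k <= n, is y (k-1) in 0-based indexing) *)
Definition ycoord (n : nat) (y : 'I_n -> R) (k : nat) : R :=
  match k with
  | 0 => 0
  | k'.+1 => oapp y 1 (insub k' : option 'I_n)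
  end.

Definition Iint (n : nat) (y : 'I_n -> R) (j : nat) : set R :=
  [set t | ycoord y j <= t <= ycoord y j.+1].

Definition Ffun (n : nat) (J : R -> \bar R) (K : 'I_n -> R -> \bar R)
    (y : 'I_n -> R) (t : R) : \bar R :=
  (J t + \sum_(i < n) K i (t - y i)%R)%E.

Definition mval (n : nat) (J : R -> \bar R) (K : 'I_n -> R -> \bar R)
    (y : 'I_n -> R) (j : nat) : \bar R :=
  ereal_sup (Ffun J K y @` Iint y j).

End Defs.

(* Main.v *)
Require Import Defs.
From HB Require Import structures.
From mathcomp Require Import all_boot all_order all_algebra.
From mathcomp Require Import all_classical all_reals.
From mathcomp Require Import ereal topology normedtype.
From mathcomp Require Import ring lra.
Import Order.TTheory GRing.Theory Num.Theory.
Import numFieldNormedType.Exports.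
Import Num.Def.
Local Open Scope classical_set_scope.
Local Open Scope ring_scope.

Set Implicit Arguments. Unset Strict Implicit.

Section K.
Variable R : realType.

Lemma chord (g : R -> R) :
  (forall x y l : R, 0 < x < 1 -> 0 < y < 1 -> 0 <= l <= 1 ->
     l * g x + (1 - l) * g y <= g (l * x + (1 - l) * y)) ->
  forall p q r, 0 < p -> p < q -> q < r -> r < 1 ->
  (r - q) * g p + (q - p) * g r <= (r - p) * g q.
Proof.
move=> cc p q r p0 pq qr r1.
have rp : 0 < r - p by lra.
pose l := (r - q) / (r - p).
have l01 : 0 <= l <= 1.
  apply/andP; split; first by rewrite /l divr_ge0 //; lra.
  by rewrite /l ler_pdivrMr //; lra.
have H := cc p r l ltac:(apply/andP; lra) ltac:(apply/andP; lra) l01.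
have E : l * p + (1 - l) * r = q.
  rewrite /l; field; lra.
rewrite E in H.
have H2 : (r - p) * (l * g p + (1 - l) * g r) <= (r - p) * g q.
  by rewrite ler_pM2l.
have -> : (r - q) * g p + (q - p) * g r = (r - p) * (l * g p + (1 - l) * g r).
  rewrite /l; field; lra.
exact: H2.
Qed.

Lemma lip (g : R -> R) :
  (forall x y l : R, 0 < x < 1 -> 0 < y < 1 -> 0 <= l <= 1 ->
     l * g x + (1 - l) * g y <= g (l * x + (1 - l) * y)) ->
  forall a' a b b' u v, 0 < a' -> a' < a -> a <= u -> u <= v -> v <= b -> b < b' -> b' < 1 ->
  `|g v - g u| <= (`|(g a - g a') / (a - a')| + `|(g b' - g b) / (b' - b)|) * (v - u).
Proof.
move=> cc a' a b b' u v a'0 a'a au uv vb bb' b'1.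
have [->|uv'] := eqVneq u v; first by rewrite !subrr normr0 mulr0.
have {uv'} uv2 : u < v by rewrite lt_neqAle uv'.
set Sa := (g a - g a') / (a - a').
set Sb := (g b' - g b) / (b' - b).
have hSa : Sa * (a - a') = g a - g a' by rewrite /Sa mulfVK //; lra.
have hSb : Sb * (b' - b) = g b' - g b by rewrite /Sb mulfVK //; lra.
have F1 := @chord g cc _ _ _ a'0 (lt_le_trans a'a au) uv2 (le_lt_trans vb (lt_trans bb' b'1)).
have F2 : g u - g a' <= Sa * (u - a').
  have [<-|au2] := eqVneq a u; first lra.
  have au3 : a < u by rewrite lt_neqAle au2.
  have := @chord g cc _ _ _ a'0 a'a au3 (le_lt_trans uv (le_lt_trans vb (lt_trans bb' b'1))).
  move=> F; have : (a - a') * (g u - g a') <= (a - a') * (Sa * (u - a')) by nra.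
  by rewrite ler_pM2l //; lra.
have up : g v - g u <= Sa * (v - u).
  have : (u - a') * (g v - g u) <= (u - a') * (Sa * (v - u)) by nra.
  by rewrite ler_pM2l //; lra.
have F3 := @chord g cc _ _ _ (lt_trans a'0 (lt_le_trans a'a au)) uv2 (le_lt_trans vb bb') b'1.
have F4 : Sb * (b' - v) <= g b' - g v.
  have [->|vb2] := eqVneq v b; first lra.
  have vb3 : v < b by rewrite lt_neqAle vb2.
  have := @chord g cc _ _ _ (lt_trans a'0 (lt_le_trans a'a (le_trans au uv))) vb3 bb' b'1.
  move=> F; have : (b' - b) * (Sb * (b' - v)) <= (b' - b) * (g b' - g v) by nra.
  by rewrite ler_pM2l //; lra.
have lo : Sb * (v - u) <= g v - g u.
  have : (b' - v) * (Sb * (v - u)) <= (b' - v) * (g v - g u) by nra.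
  by rewrite ler_pM2l //; lra.
rewrite ler_norml; apply/andP; split.
  have := ler_norm Sb; have := ler_norm (- Sb); rewrite normrN => h1 h2.
  have := normr_ge0 Sa => h3.
  nra.
have := ler_norm Sa => h1; have := normr_ge0 Sb => h3.
nra.
Qed.


Definition LP (g : R -> \bar R) (eps C x y : R) : Prop :=
  (g x < C%:E -> g y <= (C + eps)%:E)%E /\
  (C%:E <= g x -> g y <= g x + eps%:E /\ g x - eps%:E <= g y)%E.

Definition hk (g : R -> \bar R) : Prop :=
  [/\ (forall t, 0 < t < 1 -> g t \is a fin_num), concave_on g 0 1,
      g x @[x --> 0^'+] --> -oo%E, g 0 = -oo%E & g x @[x --> 1^'-] --> g 1].

Lemma LP_lowC g eps C x y : 0 <= eps -> (g x < C%:E)%E -> (g y < C%:E)%E -> LP g eps C x y.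
Proof.
move=> e0 hx hy; split => [_|].
  by apply: (le_trans (ltW hy)); rewrite lee_fin; lra.
by move=> /(lt_le_trans hx); rewrite ltxx.
Qed.

Lemma LP_close g (eps C x y vx vy : R) : g x = vx%:E -> g y = vy%:E -> `|vx - vy| <= eps ->
  LP g eps C x y.
Proof.
move=> gx gy /[dup] h; rewrite ler_norml => /andP[h1 h2]; rewrite /LP gx gy; split.
  by rewrite !lte_fin !lee_fin => ?; lra.
move=> _; split; [rewrite -EFinD lee_fin|rewrite -EFinB lee_fin]; lra.
Qed.

Lemma conc_real g : hk g -> forall x y l, 0 < x < 1 -> 0 < y < 1 -> 0 <= l <= 1 ->
  l * fine (g x) + (1 - l) * fine (g y) <= fine (g (l * x + (1 - l) * y)).
Proof.
move=> [fin cc _ _ _] x y l hx hy hl.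
have hm : 0 < l * x + (1 - l) * y < 1.
  move: hx hy hl => /andP[? ?] /andP[? ?] /andP[? ?]; have [xy|yx] := leP x y; apply/andP; split; nra.
have := cc x y l hx hy hl.
by rewrite -(fineK (fin _ hx)) -(fineK (fin _ hy)) -(fineK (fin _ hm)) -!EFinM -EFinD lee_fin.
Qed.

Lemma near_right_expl (a:R) (P : R -> Prop):
  (\forall x \near a^'+, P x) -> exists2 d, 0 < d & forall x, a < x < a + d -> P x.
Proof.
move=> [e /= e0 H]; exists e => // x /andP[ax xd]; apply: H => //=.
rewrite /ball /= ltr0_norm ?subr_lt0 // opprB ltrBlDl //.
Qed.

Lemma near_left_expl (a:R) (P : R -> Prop):
  (\forall x \near a^'-, P x) -> exists2 d, 0 < d & forall x, a - d < x < a -> P x.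
Proof.
move=> [e /= e0 H]; exists e => // x /andP[ax xd]; apply: H => //=.
rewrite /ball /= gtr0_norm ?subr_gt0 // ltrBlDl -ltrBlDr //.
Qed.

Lemma noinf1 g : hk g -> g 1 != +oo%E.
Proof.
move=> hg; have [fin cc _ _ lim1] := hg.
pose gr := fine \o g.
have cr := @conc_real g hg.
pose D := 4 * (`|gr (1/2)| + `|gr (1/4)|).
have bnd : forall x, 1/2 < x < 1 -> gr x <= D.
  move=> x /andP[x1 x2].
  have := @chord gr cr (1/4) (1/2) x ltac:(lra) ltac:(lra) x1 x2.
  have := ler_norm (gr (1/2)); have := ler_norm (gr (1/4)).
  have := ler_norm (- gr (1/2)); have := ler_norm (- gr (1/4)); rewrite !normrN.
  rewrite /D; nra.
apply/negP => /eqP h1; move: lim1; rewrite h1 => /cvgeyPgt /(_ D) /near_left_expl [d d0 hd].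
pose x := 1 - minr d (1/2) / 2.
have hm1 : minr d (1/2) <= d by rewrite ge_min lexx.
have hm2 : minr d (1/2) <= 1/2 by rewrite ge_min lexx orbT.
have hm0 : 0 < minr d (1/2) by rewrite lt_min d0 /=; lra.
have := hd x ltac:(apply/andP; rewrite /x; split; lra).
have xf : 0 < x < 1 by apply/andP; rewrite /x; split; lra.
rewrite -(fineK (fin x xf)) lte_fin.
have := bnd x ltac:(apply/andP; rewrite /x; split; lra).
rewrite /gr /=; lra.
Qed.


Lemma end1 g (eps C : R) : hk g -> 0 < eps -> exists r1 B1, 0 < r1 /\
  (forall x y, 1 - r1 < x <= 1 -> 1 - r1 < y <= 1 -> LP g eps C x y) /\
  (forall x, 1 - r1 < x <= 1 -> (g x <= B1%:E)%E).
Proof.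
move=> hg e0; have [fin _ _ _ lim1] := hg.
have ninf := @noinf1 g hg.
case E1: (g 1) => [r| |]; rewrite E1 in lim1 ninf.
- move/fine_cvgP: lim1 => [hf hc].
  have [d1 d10 hd1] := @near_left_expl 1 _ hf.
  move/cvgrPdist_lt: hc => /(_ (eps/2) ltac:(lra)) /near_left_expl [d2 d20 hd2].
  exists (minr d1 d2), (r + eps); split; first by rewrite lt_min d10 d20.
  have Q : forall x, 1 - minr d1 d2 < x <= 1 -> exists v, g x = v%:E /\ `|r - v| < eps/2.
    move=> x /andP[x1 x2]; have [->|x3] := eqVneq x 1.
      by exists r; rewrite E1 subrr normr0; split => //; lra.
    have x4 : x < 1 by rewrite lt_neqAle x3 x2.
    have m1 : minr d1 d2 <= d1 by rewrite ge_min lexx.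
    have m2 : minr d1 d2 <= d2 by rewrite ge_min lexx orbT.
    have hx1 := hd1 x ltac:(apply/andP; split; lra).
    have hx2 := hd2 x ltac:(apply/andP; split; lra).
    by exists (fine (g x)); rewrite fineK.
  split.
    move=> x y hx hy; have [vx [gx hvx]] := Q x hx; have [vy [gy hvy]] := Q y hy.
    apply: (@LP_close g eps C x y vx vy gx gy); move: hvx hvy; rewrite !ltr_norml ler_norml.
    move=> /andP[? ?] /andP[? ?]; apply/andP; split; lra.
  move=> x hx; have [v [gx hv]] := Q x hx; rewrite gx lee_fin.
  by move: hv; rewrite ltr_norml => /andP[]; lra.
- by rewrite eqxx in ninf.
- move/cvgeNyPlt: lim1 => /(_ C) /near_left_expl [d d0 hd].
  exists d, C; split => //.
  have Q : forall x, 1 - d < x <= 1 -> (g x < C%:E)%E.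
    move=> x /andP[x1 x2]; have [->|x3] := eqVneq x 1; first by rewrite E1 ltNyr.
    by apply: hd; apply/andP; split => //; rewrite lt_neqAle x3 x2.
  split; first by move=> x y hx hy; apply: LP_lowC; [lra|exact: Q|exact: Q].
  by move=> x hx; exact: ltW (Q x hx).
Qed.


Lemma hk_prop g (eps C : R) : hk g -> 0 < eps -> exists th B, [/\ 0 < th,
  (forall s, 0 <= s <= 1 -> (g s <= B%:E)%E),
  (forall s, 0 <= s <= th -> (g s < C%:E)%E) &
  (forall s s', 0 <= s <= 1 -> 0 <= s' <= 1 -> `|s - s'| <= th -> LP g eps C s s')].
Proof.
move=> hg e0; have [fin cc lim0 g0 _] := hg.
pose gr := fine \o g.
have cr := @conc_real g hg.
move/cvgeNyPlt: lim0 => /(_ C) lim0.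
have [d0 d00 hd0] := @near_right_expl 0 _ lim0.
pose r0 := minr d0 (1/2).
have r0p : 0 < r0 by rewrite lt_min d00 /=; lra.
have r0a : r0 <= d0 by rewrite ge_min lexx.
have r0b : r0 <= 1/2 by rewrite ge_min lexx orbT.
have low : forall x, 0 <= x < r0 -> (g x < C%:E)%E.
  move=> x /andP[x0 x1]; have [<-|x2] := eqVneq 0 x; first by rewrite g0 ltNyr.
  by apply: hd0; rewrite add0r; apply/andP; split; [rewrite lt_neqAle x2 x0 | lra].
have [r1' [B1 [r1p [end1P end1B]]]] := @end1 g eps C hg e0.
pose r1 := minr r1' (1/2).
have r1p' : 0 < r1 by rewrite lt_min r1p /=; lra.
have r1a : r1 <= r1' by rewrite ge_min lexx.
have r1b : r1 <= 1/2 by rewrite ge_min lexx orbT.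
pose a' := r0/8; pose a := r0/4; pose b := 1 - r1/4; pose b' := 1 - r1/8.
pose L := `|(gr a - gr a') / (a - a')| + `|(gr b' - gr b) / (b' - b)|.
have L0 : 0 <= L by rewrite addr_ge0.
have mid : forall u v, a <= u <= b -> a <= v <= b -> `|gr u - gr v| <= L * `|u - v|.
  move=> u v /andP[u1 u2] /andP[v1 v2]; have [uv|vu] := leP u v.
    have h := @lip gr cr a' a b b' u v ltac:(rewrite /a'; lra) ltac:(rewrite /a' /a; lra)
      u1 uv v2 ltac:(rewrite /b /b'; lra) ltac:(rewrite /b'; lra).
    by rewrite distrC (ler0_norm (x := u - v)) ?subr_le0 // opprB.
  have h := @lip gr cr a' a b b' v u ltac:(rewrite /a'; lra) ltac:(rewrite /a' /a; lra)
      v1 (ltW vu) u2 ltac:(rewrite /b /b'; lra) ltac:(rewrite /b'; lra).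
  by rewrite (ger0_norm (x := u - v)) ?subr_ge0 // ltW.
have finm : forall u, a <= u <= b -> g u = (gr u)%:E.
  move=> u /andP[u1 u2]; rewrite /gr /= fineK //; apply: fin.
  by apply/andP; split; move: u1 u2; rewrite /a /b; lra.
pose th := minr (minr (r0/4) (r1/4)) (eps/(L+1)).
have th0 : 0 < th.
  by rewrite !lt_min; apply/andP; split; [apply/andP; split; lra | apply: divr_gt0; lra].
have th1 : th <= r0/4 by rewrite !ge_min lexx.
have th2 : th <= r1/4 by rewrite !ge_min lexx orbT.
have th3 : th * L <= eps.
  have : th <= eps / (L + 1) by rewrite !ge_min lexx !orbT.
  rewrite ler_pdivlMr; last by lra.
  nra.
exists th, (`|C| + `|B1| + `|gr a| + L).
have nC := ler_norm C; have nB := ler_norm B1; have na := ler_norm (gr a).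
have nC0 := normr_ge0 C; have nB0 := normr_ge0 B1; have na0 := normr_ge0 (gr a).
split => //.
- move=> s /andP[s0 s1].
  have [sr0|sr0] := ltP s r0.
    apply: (le_trans (ltW (low s _))); first by rewrite s0.
    by rewrite lee_fin; lra.
  have [sr1|sr1] := ltP (1 - r1) s.
    apply: (le_trans (end1B s _)); first by apply/andP; split; lra.
    by rewrite lee_fin; lra.
  have has : a <= s <= b by apply/andP; rewrite /a /b; split; lra.
  have haa : a <= a <= b by apply/andP; rewrite /a /b; split; lra.
  rewrite finm // lee_fin.
  have := mid s a has haa; rewrite (ger0_norm (x := s - a)); last by rewrite /a; lra.
  have : s - a <= 1 by rewrite /a; lra.
  rewrite ler_norml => ? /andP[? ?]; nra.
- by move=> s /andP[? ?]; apply: low; apply/andP; split; lra.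
- move=> s s' /andP[s0 s1] /andP[s0' s1'] /[dup] hth; rewrite ler_norml => /andP[h1 h2].
  have [sl|sl] := ltP s (r0/2).
    by apply: LP_lowC; [lra|apply: low; apply/andP; split; lra|apply: low; apply/andP; split; lra].
  have [sh|sh] := ltP (1 - r1/2) s.
    by apply: end1P; apply/andP; split; lra.
  have hs : a <= s <= b by apply/andP; rewrite /a /b; split; lra.
  have hs' : a <= s' <= b by apply/andP; rewrite /a /b; split; lra.
  apply: (@LP_close g eps C s s' (gr s) (gr s') (finm s hs) (finm s' hs')).
  have := mid s s' hs hs'.
  have : L * `|s - s'| <= L * th by rewrite ler_wpM2l.
  nra.
Qed.


Lemma sk_hk k : singular_kernel k -> hk k /\ hk (fun u => k (-u)).
Proof.
move=> [[fin [cneg [cpos [l0p [l0m [lm1 l1]]]]]] k0].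
split.
  split => //; last by rewrite -k0.
  by move=> t ht; apply: fin; right.
split.
- move=> t /andP[t0 t1]; apply: fin; left; apply/andP; split; lra.
- move=> x y l /andP[x0 x1] /andP[y0 y1] hl.
  have := cneg (-x) (-y) l ltac:(apply/andP; split; lra) ltac:(apply/andP; split; lra) hl.
  by rewrite !mulrN -opprD.
- have := (cvg_at_leftNP k 0 (k 0)).1 l0m; rewrite oppr0 k0; exact.
- by rewrite oppr0.
- have := (cvg_at_rightNP k (-1) (k (-1))).1 lm1; rewrite opprK; exact.
Qed.

Lemma kl k (eps C : R) : singular_kernel k -> 0 < eps -> exists th B, [/\ 0 < th,
  (forall s, -1 <= s <= 1 -> (k s <= B%:E)%E) &
  (forall s s', -1 <= s <= 1 -> -1 <= s' <= 1 -> `|s - s'| <= th -> LP k eps C s s')].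
Proof.
move=> sk e0; have [hp hm] := sk_hk sk.
have [t1 [B1 [t10 bd1 lo1 lp1]]] := @hk_prop k eps C hp e0.
have [t2 [B2 [t20 bd2 lo2 lp2]]] := @hk_prop _ eps C hm e0.
have ta : minr t1 t2 <= t1 by rewrite ge_min lexx.
have tb : minr t1 t2 <= t2 by rewrite ge_min lexx orbT.
exists (minr t1 t2), (`|B1| + `|B2|); split.
- by rewrite lt_min t10 t20.
- move=> s /andP[s1 s2]; have [s0|s0] := leP 0 s.
    apply: (le_trans (bd1 s _)); first by rewrite s0.
    by rewrite lee_fin; have := ler_norm B1; have := normr_ge0 B2; lra.
  have := bd2 (-s) ltac:(apply/andP; split; lra); rewrite opprK => h.
  apply: (le_trans h); rewrite lee_fin; have := ler_norm B2; have := normr_ge0 B1; lra.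
- move=> s s' /andP[s1 s2] /andP[s1' s2'] /[dup] hth; rewrite ler_norml => /andP[h1 h2].
  have [s0|s0] := leP 0 s; have [s0'|s0'] := leP 0 s'.
  + by apply: lp1; [rewrite s0|rewrite s0'|lra].
  + apply: LP_lowC; first lra.
      by apply: lo1; apply/andP; split; lra.
    by have := lo2 (-s') ltac:(apply/andP; split; lra); rewrite opprK.
  + apply: LP_lowC; first lra.
      by have := lo2 (-s) ltac:(apply/andP; split; lra); rewrite opprK.
    by apply: lo1; apply/andP; split; lra.
  + have := lp2 (-s) (-s') ltac:(apply/andP; split; lra) ltac:(apply/andP; split; lra).
    rewrite /LP !opprK; apply.
    by rewrite -normrN opprD !opprK (le_trans hth).
Qed.


Lemma ycoord01 n (y : 'I_n -> R) k : Sbar y -> 0 <= ycoord y k <= 1.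
Proof.
move=> [hy _]; case: k => [|k] /=; first by rewrite lexx ler01.
by case: insubP => [i _ _|_] /=; [exact: hy | rewrite ler01 lexx].
Qed.

Lemma ycases n (x y : 'I_n -> R) k :
  ycoord y k = ycoord x k \/ exists i, ycoord y k = y i /\ ycoord x k = x i.
Proof.
case: k => [|k] /=; first by left.
by case: insubP => [i _ _|_] /=; [right; exists i | left].
Qed.

Lemma Iint01 n (y : 'I_n -> R) (j : nat) t : Sbar y -> Iint y j t -> 0 <= t <= 1.
Proof.
move=> sy /andP[t1 t2]; have /andP[a1 a2] := ycoord01 j sy.
have /andP[b1 b2] := ycoord01 j.+1 sy; apply/andP; split; lra.
Qed.


Lemma Fsplit n (J : R -> \bar R) (K : 'I_n -> R -> \bar R) (x : 'I_n -> R) t (M : R)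
    (B : 'I_n -> R) (i : 'I_n) (c : R) :
  (J t <= M%:E)%E -> (forall k, K k (t - x k)%R <= (B k)%:E)%E ->
  (K i (t - x i)%R <= c%:E)%E ->
  (Ffun J K x t <= (M + ((\sum_k B k) - B i) + c)%:E)%E.
Proof.
move=> hJ hK hi; rewrite /Ffun (bigD1 i) //=.
rewrite [X in (_ <= (_ + (X - _) + _)%:E)%E](bigD1 i) //=.
have -> : B i + \sum_(k | k != i) B k - B i = \sum_(k | k != i) B k.
  by rewrite addrC addKr.
rewrite !EFinD -addeA (addeC _ c%:E); apply: leeD => //; apply: leeD => //.
by rewrite -sumEFin; apply: lee_sum => k _.
Qed.

Lemma Fbound n (J : R -> \bar R) (K : 'I_n -> R -> \bar R) (x : 'I_n -> R) t (M : R)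
    (B : 'I_n -> R) :
  (J t <= M%:E)%E -> (forall k, K k (t - x k)%R <= (B k)%:E)%E ->
  (Ffun J K x t <= (M + \sum_k B k)%:E)%E.
Proof.
move=> hJ hK; rewrite /Ffun EFinD; apply: leeD => //.
by rewrite -sumEFin; apply: lee_sum => k _.
Qed.

Lemma Fcomp n (J : R -> \bar R) (K : 'I_n -> R -> \bar R) (x y : 'I_n -> R) t (e : R) :
  (forall k, K k (t - x k)%R <= K k (t - y k)%R + e%:E)%E ->
  (Ffun J K x t <= Ffun J K y t + (e *+ n)%:E)%E.
Proof.
move=> h; rewrite /Ffun -addeA; apply: leeD2l.
apply: (le_trans (lee_sum _ (fun k _ => h k))).
by rewrite big_split /= sumEFin sumr_const card_ord.
Qed.

End K.

Unset Implicit Arguments.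

Theorem lemma3p4 (R : realType) (n : nat) (K : 'I_n -> R -> \bar R)
    (J : R -> \bar R) (j : 'I_n.+1) :
  (forall i : 'I_n, singular_kernel (K i)) ->
  field_function n J ->
  forall (q : R) (y : 'I_n -> R),
    0 < q -> Sbar y -> mval J K y j != -oo%E ->
    exists eta : R, exists Z : set R,
      0 < eta /\ Z `<=` Iint y j /\
      forall x : 'I_n -> R, Sbar x -> (forall i : 'I_n, `|x i - y i| <= eta) ->
        [/\ Z `<=` Iint x j /\
              (forall t, Z t -> forall i : 'I_n, eta <= `|t - x i|),
            mval J K x j = ereal_sup (Ffun J K x @` Z) &
            forall t, Z t ->
              (mval J K x j - q%:E <= Ffun J K x t)%E /\
              (-oo < mval J K x j - q%:E)%E].
Proof.
move=> hK [[M hM] _] q y q0 Sy hm.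
have hB : forall i, exists B : R, forall s, -1 <= s <= 1 -> (K i s <= B%:E)%E.
  move=> i; have [th [B [_ hb _]]] := @kl R (K i) 1 0 (hK i) ltr01; by exists B.
have [B hBf] := choice hB.
pose Bt := \sum_k B k.
pose D := M + Bt.
have rng : forall (x : 'I_n -> R) t k, Sbar x -> 0 <= t <= 1 -> -1 <= t - x k <= 1.
  move=> x t k [hx _] /andP[t0 t1]; have /andP[a b] := hx k; apply/andP; split; lra.
have Fup : forall x t, Sbar x -> 0 <= t <= 1 -> (Ffun J K x t <= D%:E)%E.
  move=> x t sx ht; apply: Fbound; [exact: hM | move=> k; apply: hBf; exact: rng].
have mle : (mval J K y j <= D%:E)%E.
  apply: ge_ereal_sup => _ [t ht <-]; apply: Fup => //; exact: Iint01 ht.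
have [mr Em] : exists mr, mval J K y j = mr%:E.
  have : mval J K y j \is a fin_num.
    by rewrite fin_numE hm /= (lt_eqF (le_lt_trans mle (ltry _))).
  by move=> hf; exists (fine (mval J K y j)); rewrite fineK.
pose eps := q / (8 * n.+1%:R).
have eps0 : 0 < eps by rewrite /eps divr_gt0 // mulr_gt0 // ltr0n.
pose ne := eps *+ n.
have ne0 : 0 <= ne by rewrite /ne mulrn_wge0 // ltW.
have neq : ne <= q / 8.
  rewrite /ne -mulr_natr /eps.
  have -> : q / (8 * n.+1%:R) * n%:R = q / 8 * (n%:R / n.+1%:R).
    by rewrite invfM !mulrA -[q / 8 / _ * _]mulrA [_^-1 * n%:R]mulrC mulrA.
  apply: ler_piMr; first by apply: divr_ge0; lra.
  by rewrite ler_pdivrMr ?ltr0n // mul1r ler_nat.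
pose C i := mr - q - D + B i - eps - 1.
have hkl : forall i, exists th, 0 < th /\ (forall s s', -1 <= s <= 1 -> -1 <= s' <= 1 ->
    `|s - s'| <= th -> LP (K i) eps (C i) s s').
  move=> i; have [th [B' [th0 _ hlp]]] := @kl R (K i) eps (C i) (hK i) eps0.
  by exists th.
have [th hth] := choice hkl.
pose et := \big[minr/1]_(i < n) th i.
have et0 : 0 < et.
  rewrite /et; apply: (big_ind (fun v => 0 < v)) => //.
    by move=> a b a0 b0; rewrite lt_min a0 b0.
  by move=> i _; case: (hth i).
have etle : forall i, et <= th i.
  by move=> i; rewrite /et (bigD1 i) //= ge_min lexx.
pose eta := et / 2.
have K0 : forall i, K i 0 = -oo%E by move=> i; case: (hK i).
have small : forall x t i, Sbar x -> 0 <= t <= 1 ->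
    (K i (t - x i)%R <= (C i + eps)%:E)%E -> (Ffun J K x t <= (mr - q - 1)%:E)%E.
  move=> x t i sx ht hi.
  apply: (le_trans (Fsplit (B := B) (hM t ht) (fun k => hBf k _ (rng x t k sx ht)) hi)).
  by rewrite lee_fin /C /D /Bt; lra.
have nears : forall x t i, Sbar x -> 0 <= t <= 1 -> `|t - x i| <= th i ->
    (K i (t - x i)%R <= (C i + eps)%:E)%E.
  move=> x t i sx ht hd; have [_ hlp] := hth i.
  have [h1 _] := hlp 0 (t - x i) ltac:(apply/andP; split; lra) (rng x t i sx ht)
    ltac:(by rewrite sub0r normrN).
  by apply: h1; rewrite K0 ltNyr.
have far : forall t, 0 <= t <= 1 -> ((mr - q/2)%:E <= Ffun J K y t)%E ->
    forall i, th i < `|t - y i| /\ ((C i)%:E <= K i (t - y i)%R)%E.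
  move=> t ht hF i; split.
    rewrite ltNge; apply/negP => hd.
    have := le_trans hF (small y t i Sy ht (nears y t i Sy ht hd)).
    by rewrite lee_fin; lra.
  rewrite leNgt; apply/negP => hk.
  have hk' : (K i (t - y i)%R <= (C i + eps)%:E)%E.
    by apply: (le_trans (ltW hk)); rewrite lee_fin; lra.
  have := le_trans hF (small y t i Sy ht hk').
  by rewrite lee_fin; lra.
have : ((mr - q/8)%:E < mval J K y j)%E by rewrite Em lte_fin; lra.
move/ereal_sup_gt => [_ [t0 ht0 <-] ht0F].
exists eta, (fun t => Iint y j t /\ ((mr - q/2)%:E <= Ffun J K y t)%E).
split; first by rewrite /eta divr_gt0.
split; first by move=> t [].
move=> x Sx hxy.
have hxy' : forall i, `|x i - y i| <= th i.
  move=> i; apply: (le_trans (hxy i)); have := etle i; rewrite /eta; lra.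
have comp : forall t, 0 <= t <= 1 -> (forall i, ((C i)%:E <= K i (t - y i)%R)%E) ->
    (Ffun J K x t <= Ffun J K y t + ne%:E)%E /\ (Ffun J K y t <= Ffun J K x t + ne%:E)%E.
  move=> t ht hc.
  have H : forall k, (K k (t - x k)%R <= K k (t - y k)%R + eps%:E)%E /\
                     (K k (t - y k)%R - eps%:E <= K k (t - x k)%R)%E.
    move=> k; have [_ hlp] := hth k.
    have [_ h2] := hlp (t - y k) (t - x k) (rng y t k Sy ht) (rng x t k Sx ht)
      ltac:(by have -> : t - y k - (t - x k) = x k - y k by ring).
    exact: h2 (hc k).
  split; apply: Fcomp => k; first exact: (H k).1.
  by rewrite -leeBlDr //; exact: (H k).2.
have dich : forall t, Iint x j t -> (Ffun J K x t <= (mr - q - 1)%:E)%E \/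
    [/\ Iint y j t, (Ffun J K x t <= Ffun J K y t + ne%:E)%E &
        (forall i, ((C i)%:E <= K i (t - y i)%R)%E)].
  move=> t htx; have ht := Iint01 Sx htx.
  have [hty|hty] := pselect (Iint y j t); last first.
    left; have /andP[l1 l2] : ycoord x j <= t <= ycoord x j.+1 := htx.
    have hn : ~ (ycoord y j <= t <= ycoord y j.+1) := hty.
    have [h1|h1] := leP (ycoord y j) t; last first.
      case: (ycases x y j) => [e|[i [e1 e2]]]; first by rewrite e in h1; move: l1; rewrite leNgt h1.
      apply: (small x t i Sx ht); apply: nears => //.
      rewrite e1 in h1; rewrite e2 in l1.
      move: (hxy' i); rewrite ler_norml => /andP[a1 a2].
      by rewrite ger0_norm; lra.
    have [h2|h2] := leP t (ycoord y j.+1).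
      by exfalso; apply: hn; rewrite h1 h2.
    case: (ycases x y j.+1) => [e|[i [e1 e2]]]; first by rewrite e in h2; move: l2; rewrite leNgt h2.
    apply: (small x t i Sx ht); apply: nears => //.
    rewrite e1 in h2; rewrite e2 in l2.
    move: (hxy' i); rewrite ler_norml => /andP[a1 a2].
    by rewrite ler0_norm; lra.
  have [hc|hc] := pselect (forall i, ((C i)%:E <= K i (t - y i)%R)%E).
    by right; split => //; exact: (comp t ht hc).1.
  left; move/existsNP: hc => [i] /negP; rewrite -ltNge => hi.
  apply: (small x t i Sx ht); have [_ hlp] := hth i.
  have [h1 _] := hlp (t - y i) (t - x i) (rng y t i Sy ht) (rng x t i Sx ht)
      ltac:(by have -> : t - y i - (t - x i) = x i - y i by ring).
  exact: h1 hi.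
have Zsub : forall t, Iint y j t -> ((mr - q/2)%:E <= Ffun J K y t)%E -> Iint x j t.
  move=> t hty hF; have ht := Iint01 Sy hty.
  have hf := far t ht hF.
  have /andP[l1 l2] : ycoord y j <= t <= ycoord y j.+1 := hty.
  apply/andP; split.
    case: (ycases x y j) => [e|[i [e1 e2]]]; first by rewrite -e.
    rewrite e2; rewrite e1 in l1; have [d _] := hf i.
    move: (hxy' i) d; rewrite ler_norml ltr_normr => /andP[a1 a2] /orP[] d.
      have := etle i; have := hxy i; rewrite ler_norml /eta => /andP[b1 b2] ?; lra.
    lra.
  case: (ycases x y j.+1) => [e|[i [e1 e2]]]; first by rewrite -e.
  rewrite e2; rewrite e1 in l2; have [d _] := hf i.
  move: (hxy' i) d; rewrite ler_norml ltr_normr => /andP[a1 a2] /orP[] d.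
    lra.
  have := etle i; have := hxy i; rewrite ler_norml /eta => /andP[b1 b2] ?; lra.
have ht0' : 0 <= t0 <= 1 := Iint01 Sy ht0.
have hF0 : ((mr - q/2)%:E <= Ffun J K y t0)%E.
  by apply: (le_trans _ (ltW ht0F)); rewrite lee_fin; lra.
have Zt0 : Iint x j t0 := Zsub t0 ht0 hF0.
have F0 : ((mr - q/4)%:E <= Ffun J K x t0)%E.
  have [_ hl] := comp t0 ht0' (fun i => (far t0 ht0' hF0 i).2).
  have := lt_le_trans ht0F hl; rewrite -lteBlDr // => h.
  by apply: (le_trans _ (ltW h)); rewrite -EFinB lee_fin; lra.
have mxup : (mval J K x j <= (mr + q/8)%:E)%E.
  apply: ge_ereal_sup => _ [t ht <-]; case: (dich t ht) => [h|[hty h _]].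
    by apply: (le_trans h); rewrite lee_fin; lra.
  apply: (le_trans h).
  have hy : (Ffun J K y t <= mval J K y j)%E.
    exact: (ereal_sup_ubound (ex_intro2 _ _ t hty erefl)).
  rewrite Em in hy; apply: (le_trans (leeD2r _ hy)).
  by rewrite -EFinD lee_fin; lra.
pose Z := fun t => Iint y j t /\ ((mr - q/2)%:E <= Ffun J K y t)%E.
have supZ : (Ffun J K x t0 <= ereal_sup (Ffun J K x @` Z))%E.
  exact: (ereal_sup_ubound (ex_intro2 _ _ t0 (conj ht0 hF0) erefl)).
have mxlo : ((mr - q/4)%:E <= mval J K x j)%E.
  apply: (le_trans F0).
  exact: (ereal_sup_ubound (ex_intro2 _ _ t0 Zt0 erefl)).
have eqm : mval J K x j = ereal_sup (Ffun J K x @` Z).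
  apply/eqP; rewrite eq_le; apply/andP; split.
    apply: ge_ereal_sup => _ [t ht <-].
    have [Zt|nZt] := pselect (Z t).
      exact: (ereal_sup_ubound (ex_intro2 _ _ t Zt erefl)).
    case: (dich t ht) => [h|[hty h _]].
      apply: (le_trans h); apply: (le_trans _ (le_trans F0 supZ)).
      by rewrite lee_fin; lra.
    have hlt : (Ffun J K y t < (mr - q/2)%:E)%E.
      by rewrite ltNge; apply/negP => hh; apply: nZt.
    apply: (le_trans h); apply: (le_trans _ (le_trans F0 supZ)).
    apply: (le_trans (leeD2r _ (ltW hlt))).
    by rewrite -EFinD lee_fin; lra.
  by apply: le_ereal_sup; apply: image_subset => t [h1 h2]; exact: Zsub h1 h2.
split.
- split; first by move=> t [h1 h2]; exact: Zsub.
  move=> t [hty hF] i; have [hf _] := far t (Iint01 Sy hty) hF i.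
  have := etle i; have := et0.
  move: hf (hxy i); rewrite ltr_normr ler_norml /eta => /orP[] h1 /andP[h2 h3] ? ?;
    rewrite ler_normr; apply/orP; [left|right]; lra.
- exact: eqm.
- move=> t [hty hF]; have ht := Iint01 Sy hty.
  have [_ hl] := comp t ht (fun i => (far t ht hF i).2).
  split.
    rewrite leeBlDr //; apply: (le_trans mxup).
    have := le_trans hF hl; rewrite -leeBlDr // => h.
    apply: (le_trans _ (leeD2r _ h)).
    by rewrite -EFinB -EFinD lee_fin; lra.
  apply: (lt_le_trans _ (leeD2r _ mxlo)).
  by rewrite -EFinB ltNyr.
Qed.
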